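(* There exists a deterministic distributed algorithm such that, for every graph $G$ (of any size $n$ and any diameter $D$), there is an assignment of advice to the nodes of $G$ with advice size $1$ (one node receives the bit $1$, all others receive the bit $0$) under which the algorithm accomplishes labeled topology recognition in $G$ within time $2D+1$.
   Context: Graphs are finite, simple, undirected, connected, with no node labels; at each node of degree $d$ the incident edges carry distinct port numbers $0,\dots,d-1$ (no coherence between endpoints). Two such graphs are isomorphic if there is a bijection of nodes preserving edges and the port numbers at both endpoints of every edge. Communication model (LOCAL): computation proceeds in synchronous rounds, all nodes start simultaneously; in each round every node may send arbitrary messages to all its neighbours, receives the messages of its neighbours (knowing the port through which each arrives), and performs arbitrary local computation. Initially a node knows only its degree and its advice. Advice: an oracle that knows the whole graph assigns to each node a binary string; the size of advice is the maximum length of these strings. All nodes execute the same deterministic algorithm, which does not know the graph. Anonymous topology recognition: every node outputs a port-labeled graph isomorphic to $G$. Labeled topology recognition: all nodes output the same port-labeled graph $H$ with distinct node labels, and each node outputs its own label, such that there is an isomorphism from $G$ to $H$ mapping every node to the node of $H$ carrying the label that node output. The time of recognition is the number of rounds after which all nodes have produced their output. *)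

(* Defs.v *)
From mathcomp Require Import all_boot.
Unset Strict Implicit. Unset Printing Implicit Defensive.

(** * Port-labeled graphs
    Nodes are 0, ..., pg_n - 1.  Node [v] has degree [pg_deg v]; for a port
    [p < pg_deg v], [pg_nbr v p = (u, q)] means that the edge leaving [v] by
    port [p] reaches [u], where it has port number [q]. *)
Record pgraph := PGraph {
  pg_n : nat;
  pg_deg : nat -> nat;
  pg_nbr : nat -> nat -> nat * nat }.

Fixpoint walk (G : pgraph) (k : nat) (u v : nat) : Prop :=
  match k with
  | 0 => u = v
  | k'.+1 => exists2 p, p < pg_deg G u & walk G k' (pg_nbr G u p).1 v
  end.

Definition pg_wf (G : pgraph) : Prop :=
  [/\ 0 < pg_n G,
      (forall v p, v < pg_n G -> p < pg_deg G v ->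
         let: (u, q) := pg_nbr G v p in
         [/\ u < pg_n G, q < pg_deg G u, pg_nbr G u q = (v, p) & u != v]),
      (forall v p1 p2, v < pg_n G -> p1 < pg_deg G v -> p2 < pg_deg G v ->
         (pg_nbr G v p1).1 = (pg_nbr G v p2).1 -> p1 = p2)
    &
      (forall u v, u < pg_n G -> v < pg_n G -> exists k, walk G k u v)].

Definition is_dist (G : pgraph) (u v d : nat) : Prop :=
  walk G d u v /\ (forall k, k < d -> ~ walk G k u v).

Definition is_diameter (G : pgraph) (D : nat) : Prop :=
  (exists u v, [/\ u < pg_n G, v < pg_n G & is_dist G u v D]) /\
  (forall u v d, u < pg_n G -> v < pg_n G -> is_dist G u v d -> d <= D).

Definition pg_iso (G H : pgraph) (f : nat -> nat) : Prop :=
  [/\ pg_n H = pg_n G,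
      (forall v, v < pg_n G -> f v < pg_n H),
      {in [pred v | v < pg_n G] &, injective f},
      (forall v, v < pg_n G -> pg_deg H (f v) = pg_deg G v)
    & (forall v p, v < pg_n G -> p < pg_deg G v ->
         pg_nbr H (f v) p = (f (pg_nbr G v p).1, (pg_nbr G v p).2))].

(** * Deterministic algorithms in the LOCAL model
    A node starts in state [alg_init d a] where [d] is its degree and [a] its
    advice; in each round it sends [alg_send s p] through each port [p], then
    updates its state with the list of messages received, indexed by the port
    of arrival.  [alg_out s] is [Some o] once the node has produced output [o].
    For labeled topology recognition the output is a port-labeled graph [H]
    whose nodes 0..pg_n H - 1 are the (distinct) labels, together with the
    label of the node itself. *)
Record algorithm := Algorithm {
  alg_state : Type;
  alg_msg : Type;
  alg_init : nat -> bitseq -> alg_state;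
  alg_send : alg_state -> nat -> alg_msg;
  alg_recv : alg_state -> seq alg_msg -> alg_state;
  alg_out : alg_state -> option (pgraph * nat) }.

Fixpoint exec (A : algorithm) (G : pgraph) (adv : nat -> bitseq) (t : nat)
  : nat -> alg_state A :=
  match t with
  | 0 => fun v => alg_init A (pg_deg G v) (adv v)
  | t'.+1 => fun v =>
      let st := exec A G adv t' in
      alg_recv A (st v)
        [seq alg_send A (st (pg_nbr G v p).1) (pg_nbr G v p).2
           | p <- iota 0 (pg_deg G v)]
  end.

Definition outputs_at (A : algorithm) (G : pgraph) (adv : nat -> bitseq)
    (v t : nat) (o : pgraph * nat) : Prop :=
  (forall s, s < t -> alg_out A (exec A G adv s v) = None) /\
  alg_out A (exec A G adv t v) = Some o.

Definition labeled_recognition_within (A : algorithm) (G : pgraph)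
    (adv : nat -> bitseq) (T : nat) : Prop :=
  exists (H : pgraph) (lab : nat -> nat),
    pg_iso G H lab /\
    forall v, v < pg_n G -> exists2 t, t <= T & outputs_at A G adv v t (H, lab v).

Definition one_marked_advice (G : pgraph) (adv : nat -> bitseq) : Prop :=
  exists2 r, r < pg_n G &
    adv r = [:: true] /\ (forall v, v < pg_n G -> v != r -> adv v = [:: false]).

(* Main.v *)
Require Import Defs.
From mathcomp Require Import all_boot zify.
From Stdlib Require Import ClassicalEpsilon Classical ProofIrrelevance FunctionalExtensionality PropExtensionality.
Set Implicit Arguments. Unset Strict Implicit. Unset Printing Implicit Defensive.

Fixpoint fol G u (ps : seq nat) : nat :=
  if ps is p :: ps' then fol G (pg_nbr G u p).1 ps' else u.
Fixpoint okw G u (ps : seq nat) : bool :=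
  if ps is p :: ps' then (p < pg_deg G u) && okw G (pg_nbr G u p).1 ps' else true.
Fixpoint backs G u (ps : seq nat) : seq nat :=
  if ps is p :: ps' then (pg_nbr G u p).2 :: backs G (pg_nbr G u p).1 ps' else [::].

Lemma fol_cat G u ps qs : fol G u (ps ++ qs) = fol G (fol G u ps) qs.
Proof. by elim: ps u => //= p ps IH u. Qed.
Lemma okw_cat G u ps qs : okw G u (ps ++ qs) = okw G u ps && okw G (fol G u ps) qs.
Proof. by elim: ps u => //= p ps IH u; rewrite IH andbA. Qed.
Lemma backs_cat G u ps qs :
  backs G u (ps ++ qs) = backs G u ps ++ backs G (fol G u ps) qs.
Proof. by elim: ps u => //= p ps IH u; rewrite IH. Qed.
Lemma size_backs G u ps : size (backs G u ps) = size ps.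
Proof. by elim: ps u => //= p ps IH u; rewrite IH. Qed.

Lemma cat_inj_r (s1 s2 s3 s4 : seq nat) :
  size s1 = size s2 -> s1 ++ s3 = s2 ++ s4 -> s3 = s4.
Proof. by move=> Hs /eqP; rewrite eqseq_cat // => /andP[_ /eqP]. Qed.

Lemma nbr_wf G v p : pg_wf G -> v < pg_n G -> p < pg_deg G v ->
  [/\ (pg_nbr G v p).1 < pg_n G, (pg_nbr G v p).2 < pg_deg G (pg_nbr G v p).1,
      pg_nbr G (pg_nbr G v p).1 (pg_nbr G v p).2 = (v, p)
    & (pg_nbr G v p).1 != v].
Proof. by case=> _ H _ _ Hv Hp; move: (H v p Hv Hp); case: (pg_nbr G v p). Qed.

Lemma fol_range G u ps : pg_wf G -> u < pg_n G -> okw G u ps -> fol G u ps < pg_n G.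
Proof.
move=> wf; elim: ps u => //= p ps IH u Hu /andP[Hp Hw].
by apply: IH => //; case: (nbr_wf wf Hu Hp).
Qed.

Lemma back_inj G ps x y : pg_wf G -> x < pg_n G -> y < pg_n G ->
  okw G x ps -> okw G y ps -> backs G x ps = backs G y ps -> fol G x ps = fol G y ps ->
  x = y.
Proof.
move=> wf; elim: ps x y => //= p ps IH x y Hx Hy /andP[Hpx Hwx] /andP[Hpy Hwy] [Hq Hb] Hf.
case: (nbr_wf wf Hx Hpx) => Hx1 _ Ex _.
case: (nbr_wf wf Hy Hpy) => Hy1 _ Ey _.
have E1 := IH _ _ Hx1 Hy1 Hwx Hwy Hb Hf.
by move: Ex Ey; rewrite E1 Hq => -> [].
Qed.

Lemma walk_okw G k u v : walk G k u v -> exists ps, [/\ size ps = k, okw G u ps & fol G u ps = v].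
Proof.
elim: k u => [|k IH] u /=; first by move=> ->; exists [::].
case=> p Hp /IH [ps [Hs Hw Hf]]; exists (p :: ps) => /=; by rewrite Hs Hp Hw.
Qed.

Lemma walk_dist G k u v : walk G k u v -> exists d, is_dist G u v d.
Proof.
elim: k {-2}k (leqnn k) => [|m IH] k Hk Hw.
  by exists k; split => // j; move: Hk; rewrite leqn0 => /eqP ->.
case: (classic (exists j, j < k /\ walk G j u v)) => [[j [Hj Hwj]]|Hn].
  by apply: (IH j) => //; rewrite -ltnS (leq_trans Hj).
by exists k; split => // j Hj Hwj; apply: Hn; exists j.
Qed.

Lemma short_path G D u w : pg_wf G -> is_diameter G D -> u < pg_n G -> w < pg_n G ->
  exists ps, [/\ size ps <= D, okw G u ps & fol G u ps = w].
Proof.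
move=> wf [_ Hd] Hu Hw; case: (wf) => _ _ _ Hc.
case: (Hc u w Hu Hw) => k /walk_dist [d Hdd].
have := Hd _ _ _ Hu Hw Hdd; case: Hdd => /walk_okw [ps [Hs Hok Hf]] _ HdD.
by exists ps; rewrite Hs.
Qed.

Inductive view : Type := V : nat -> bitseq -> seq (nat * view) -> view.

Fixpoint viewf (G : pgraph) (adv : nat -> bitseq) (t u : nat) : view :=
  match t with
  | 0 => V (pg_deg G u) (adv u) [::]
  | t'.+1 => V (pg_deg G u) (adv u)
      [seq ((pg_nbr G u p).2, viewf G adv t' (pg_nbr G u p).1) | p <- iota 0 (pg_deg G u)]
  end.

Lemma view_top G adv t u : exists cs, viewf G adv t u = V (pg_deg G u) (adv u) cs.
Proof. by case: t => [|t] /=; eexists. Qed.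

Lemma view_eq_top G adv G' adv' t u u' : viewf G adv t u = viewf G' adv' t u' ->
  pg_deg G u = pg_deg G' u' /\ adv u = adv' u'.
Proof.
case: (view_top G adv t u) => cs ->; case: (view_top G' adv' t u') => cs' -> [] //.
Qed.

Lemma view_eq_step G adv G' adv' t u u' p :
  viewf G adv t.+1 u = viewf G' adv' t.+1 u' -> p < pg_deg G u ->
  (pg_nbr G u p).2 = (pg_nbr G' u' p).2 /\
  viewf G adv t (pg_nbr G u p).1 = viewf G' adv' t (pg_nbr G' u' p).1.
Proof.
move=> /= [Hd _ Hc] Hp.
have := congr1 (fun s => nth (0, V 0 [::] [::]) s p) Hc => /=.
rewrite (nth_map 0) ?size_iota // (nth_map 0) ?size_iota -?Hd //.
by rewrite !nth_iota -?Hd // => -[].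
Qed.

Lemma view_follow G adv G' adv' ps t u u' :
  viewf G adv t u = viewf G' adv' t u' -> size ps <= t -> okw G u ps ->
  [/\ okw G' u' ps, backs G u ps = backs G' u' ps &
      viewf G adv (t - size ps) (fol G u ps) = viewf G' adv' (t - size ps) (fol G' u' ps)].
Proof.
elim: ps t u u' => [|p ps IH] t u u' Hv /=; first by rewrite subn0.
case: t Hv => [|t] Hv //= Hs /andP[Hp Hw].
case: (view_eq_step Hv Hp) => Hq Hv1.
case: (IH _ _ _ Hv1 Hs Hw) => Hw' Hb Hv'.
have [Hd _] := view_eq_top Hv.
by rewrite -Hd Hp Hw' Hq Hb subSS.
Qed.

Lemma iso_id G : pg_iso G G id.
Proof. by split => // v p _ _ /=; case: (pg_nbr G v p). Qed.

Lemma iso_comp G1 G2 G3 f h : pg_iso G1 G2 f -> pg_iso G2 G3 h -> pg_iso G1 G3 (h \o f).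
Proof.
case=> n12 r12 i12 d12 b12 [n23 r23 i23 d23 b23]; split => /=.
- by rewrite n23.
- by move=> v Hv; apply: r23; apply: r12.
- move=> a b Ha Hb /i23 E; apply: i12 => //; apply: E; rewrite inE; by apply: r12.
- by move=> v Hv; rewrite d23 ?d12 //; apply: r12.
- move=> v p Hv Hp; rewrite b23 ?b12 //; first exact: r12.
  by rewrite d12.
Qed.

Lemma iso_inv G H f : pg_wf G -> pg_iso G H f ->
  exists h, [/\ pg_iso H G h, forall u, u < pg_n G -> h (f u) = u
            & forall b, b < pg_n H -> f (h b) = b].
Proof.
move=> wf [nHG rf inj df bf].
pose s := map f (iota 0 (pg_n G)).
have us : uniq s.
  rewrite map_inj_in_uniq ?iota_uniq // => a b; rewrite !mem_iota !add0n => Ha Hb.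
  by apply: inj.
have sub : {subset s <= iota 0 (pg_n H)}.
  by move=> x /mapP [u]; rewrite !mem_iota !add0n => Hu ->; apply: rf.
have [_ eqs] : (size s = size (iota 0 (pg_n H))) * (s =i iota 0 (pg_n H)).
  by apply: uniq_min_size => //; rewrite size_map !size_iota nHG.
have ins b : b < pg_n H -> b \in s by move=> Hb; rewrite eqs mem_iota.
pose h b := nth 0 (iota 0 (pg_n G)) (index b s).
have hlt b : b < pg_n H -> h b < pg_n G.
  move=> Hb; have := ins b Hb; rewrite -index_mem size_map size_iota => Hi.
  by rewrite /h nth_iota.
have fh b : b < pg_n H -> f (h b) = b.
  move=> Hb; have := ins b Hb; rewrite -index_mem => Hi.
  have := nth_index 0 (ins b Hb); rewrite (nth_map 0) //.
  by move: Hi; rewrite size_map.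
have hf u : u < pg_n G -> h (f u) = u.
  move=> Hu; apply: inj; rewrite ?inE ?hlt ?fh //; exact: rf.
exists h; split => //; split.
- by [].
- exact: hlt.
- move=> a b Ha Hb E; by rewrite -(fh a Ha) -(fh b Hb) E.
- by move=> b Hb; rewrite -{2}(fh b Hb) df // hlt.
- move=> b p Hb Hp.
  have Hp' : p < pg_deg G (h b) by rewrite -df ?hlt // fh.
  have := bf _ _ (hlt b Hb) Hp'; rewrite fh // => ->.
  case: (nbr_wf wf (hlt b Hb) Hp') => Hlt _ _ _.
  by rewrite /= hf //; case: (pg_nbr G (h b) p).
Qed.

Lemma iso_unique G H f h r : pg_wf G -> pg_iso G H f -> pg_iso G H h ->
  r < pg_n G -> f r = h r -> forall u, u < pg_n G -> f u = h u.
Proof.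
move=> wf [_ _ _ df bf] [_ _ _ dh bh] Hr Er u Hu.
case: (wf) => _ _ _ Hc; case: (Hc r u Hr Hu) => k /walk_okw [ps [_ Hw <-]].
elim: ps r Hr Er Hw {Hu} => //= p ps IH a Ha Ea /andP[Hp Hw].
apply: IH => //; first by case: (nbr_wf wf Ha Hp).
by have := bf a p Ha Hp; rewrite Ea bh // => -[].
Qed.

Lemma core G adv G' adv' D r r' v v' :
  pg_wf G -> pg_wf G' -> is_diameter G D ->
  r < pg_n G -> adv r = [:: true] ->
  r' < pg_n G' -> (forall u, u < pg_n G' -> adv' u = [:: true] -> u = r') ->
  (forall u, u < pg_n G -> adv u = [:: true] -> u = r) ->
  v < pg_n G -> v' < pg_n G' ->
  viewf G adv (2 * D + 1) v = viewf G' adv' (2 * D + 1) v' ->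
  exists g, [/\ pg_iso G G' g, g r = r' & g v = v'].
Proof.
move=> wf wf' dG Hr Ar Hr' U' U Hv Hv' Heq.
have sp u : exists ps, u < pg_n G -> [/\ size ps <= D, okw G v ps & fol G v ps = u].
  case: (ltnP u (pg_n G)) => Hu; last by exists [::] => H; exfalso; lia.
  by case: (short_path wf dG Hv Hu) => ps Hps; exists ps.
pose sig u := epsilon (inhabits [::]) (fun ps => u < pg_n G ->
                 [/\ size ps <= D, okw G v ps & fol G v ps = u]).
have sigP u : u < pg_n G -> [/\ size (sig u) <= D, okw G v (sig u) & fol G v (sig u) = u].
  exact: (epsilon_spec (inhabits [::]) _ (sp u)).
pose g u := fol G' v' (sig u).
have FW ps : okw G v ps -> size ps <= 2 * D + 1 -> fol G v ps = r -> fol G' v' ps = r'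
     /\ okw G' v' ps /\ backs G v ps = backs G' v' ps.
  move=> Hw Hs Hf; case: (view_follow Heq Hs Hw) => Hw' Hb /view_eq_top [_].
  rewrite Hf Ar => /esym E; split => //; apply: U' => //.
  exact: fol_range.
have C ps : okw G v ps -> size ps <= D.+1 -> fol G' v' ps = g (fol G v ps).
  move=> Hw Hs; set z := fol G v ps.
  have Hz : z < pg_n G by exact: fol_range.
  case: (short_path wf dG Hz Hr) => rho [Hrs Hrw Hrf].
  case: (sigP z Hz) => Hss Hsw Hsf.
  have [F1 [W1 B1]] : fol G' v' (ps ++ rho) = r' /\ okw G' v' (ps ++ rho) /\
       backs G v (ps ++ rho) = backs G' v' (ps ++ rho).
    apply: FW; rewrite ?okw_cat ?fol_cat ?size_cat ?Hw ?Hrw //; lia.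
  have [F2 [W2 B2]] : fol G' v' (sig z ++ rho) = r' /\ okw G' v' (sig z ++ rho) /\
       backs G v (sig z ++ rho) = backs G' v' (sig z ++ rho).
    apply: FW; rewrite ?okw_cat ?fol_cat ?size_cat ?Hsw ?Hsf ?Hrw //; lia.
  move: W1 W2 B1 B2 F1 F2; rewrite !okw_cat !backs_cat !fol_cat Hsf -/z.
  move=> /andP[W1a W1b] /andP[W2a W2b] B1 B2 F1 F2.
  apply: (back_inj (ps := rho) wf'); rewrite ?F1 ?F2 //.
  - exact: fol_range.
  - exact: fol_range.
  - have E1 := cat_inj_r (_ : _ = _) B1; rewrite !size_backs in E1.
    have E2 := cat_inj_r (_ : _ = _) B2; rewrite !size_backs in E2.
    by rewrite -(E1 erefl) -(E2 erefl).
have sigW u : u < pg_n G -> okw G' v' (sig u) /\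
     viewf G adv (2 * D + 1 - size (sig u)) u = viewf G' adv' (2 * D + 1 - size (sig u)) (g u).
  move=> Hu; case: (sigP u Hu) => Hs Hw Hf.
  case: (view_follow Heq (_ : size (sig u) <= 2 * D + 1) Hw); first lia.
  by rewrite Hf.
have grange u : u < pg_n G -> g u < pg_n G'.
  by move=> Hu; case: (sigW u Hu) => W _; exact: fol_range.
have gdeg u : u < pg_n G -> pg_deg G' (g u) = pg_deg G u.
  by move=> Hu; case: (sigW u Hu) => _ /view_eq_top [].
have gnbr u p : u < pg_n G -> p < pg_deg G u ->
    pg_nbr G' (g u) p = (g (pg_nbr G u p).1, (pg_nbr G u p).2).
  move=> Hu Hp; case: (sigP u Hu) => Hs Hw Hf.
  have Hw2 : okw G v (sig u ++ [:: p]) by rewrite okw_cat Hw Hf /= Hp.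
  have E1 : fol G' v' (sig u ++ [:: p]) = g (pg_nbr G u p).1.
    rewrite C //; first by rewrite fol_cat Hf.
    rewrite size_cat /=; lia.
  case: (view_follow Heq (_ : size (sig u ++ [:: p]) <= 2 * D + 1) Hw2).
    rewrite size_cat /=; lia.
  rewrite !backs_cat => _ B _.
  have B' := cat_inj_r (_ : _ = _) B; rewrite !size_backs in B'.
  move: (B' erefl) E1; rewrite fol_cat Hf /= => -[E2] <-.
  by rewrite E2 -/(g u); case: (pg_nbr G' (g u) p).
have gv : g v = v' by rewrite -(C [::]).
have gr : g r = r'.
  apply: U'; first exact: grange.
  by case: (sigW r Hr) => _ /view_eq_top [_ <-].
have ginj : {in [pred u | u < pg_n G] &, injective g}.
  move=> u1 u2; rewrite !inE => Hu1 Hu2 Eg.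
  case: (short_path wf dG Hu1 Hr) => rho [Hrs Hrw Hrf].
  case: (sigP u1 Hu1) => Hs1 Hw1 Hf1; case: (sigP u2 Hu2) => Hs2 Hw2 Hf2.
  have S1 : size (sig u1 ++ rho) <= 2 * D + 1 by rewrite size_cat; lia.
  have O1 : okw G v (sig u1 ++ rho) by rewrite okw_cat Hw1 Hf1.
  case: (view_follow Heq S1 O1) => W1 B1 V1.
  move: W1 B1 V1; rewrite okw_cat !backs_cat !fol_cat Hf1 Hrf => /andP[W1a W1b] B1.
  move=> /view_eq_top [_]; rewrite Ar -/(g u1) => /esym A1.
  have R1 : fol G' (g u1) rho = r' by apply: U' => //; apply: fol_range => //; exact: grange.
  have S2 : size (sig u2 ++ rho) <= 2 * D + 1 by rewrite size_cat; lia.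
  have O2 : okw G' v' (sig u2 ++ rho).
    by rewrite okw_cat -/(g u2) -Eg W1b andbT; case: (sigW u2 Hu2).
  case: (view_follow (esym Heq) S2 O2) => W2 B2 V2.
  move: W2 B2 V2; rewrite okw_cat !backs_cat !fol_cat Hf2 -/(g u2) -Eg R1.
  move=> /andP[W2a W2b] B2 /view_eq_top [_ A2].
  rewrite R1 in A1; rewrite A1 in A2.
  have R2 : fol G u2 rho = r by apply: U => //; apply: fol_range.
  have E1 := cat_inj_r (_ : _ = _) B1; rewrite !size_backs in E1.
  have E2 := cat_inj_r (_ : _ = _) B2; rewrite !size_backs in E2.
  apply: (back_inj (ps := rho) wf) => //.
  by rewrite (E1 erefl) (E2 erefl).
  by rewrite Hrf R2.
have gsurj b : b < pg_n G' -> exists2 u, u < pg_n G & g u = b.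
  move=> Hb; case: (wf') => _ _ _ Hc.
  case: (Hc v' b Hv' Hb) => k /walk_okw [ps [_ Hw <-]].
  have gen : forall qs a, a < pg_n G -> okw G' (g a) qs ->
      exists2 u, u < pg_n G & g u = fol G' (g a) qs.
    elim=> [|p qs IH] a Ha /=; first by exists a.
    move=> /andP[Hp Hw']; rewrite gdeg // in Hp.
    rewrite gnbr //; apply: IH => //; first by case: (nbr_wf wf Ha Hp).
    by move: Hw'; rewrite gnbr.
  by rewrite -gv in Hw *; apply: gen.
have Hn : pg_n G' = pg_n G.
  have L1 : size (iota 0 (pg_n G')) <= size (map g (iota 0 (pg_n G))).
    apply: uniq_leq_size; first exact: iota_uniq.
    move=> b; rewrite mem_iota add0n => /= Hb; case: (gsurj b Hb) => u Hu <-.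
    by apply: map_f; rewrite mem_iota.
  have L2 : size (map g (iota 0 (pg_n G))) <= size (iota 0 (pg_n G')).
    apply: uniq_leq_size.
      rewrite map_inj_in_uniq ?iota_uniq // => a b; rewrite !mem_iota !add0n => Ha Hb.
      by apply: ginj.
    by move=> x /mapP [u]; rewrite !mem_iota !add0n => Hu ->; apply: grange.
  rewrite size_map !size_iota in L1 L2; apply/eqP; rewrite eqn_leq L1 L2 //.
by exists g; split => //; split.
Qed.

Definition miso G (adv : nat -> bitseq) K k f :=
  pg_iso G K f /\ (forall u, u < pg_n G -> adv u = [:: true] -> f u = k).

Definition canon G adv : pgraph * nat :=
  epsilon (inhabits (G, 0)) (fun Kk => exists f, miso G adv Kk.1 Kk.2 f).

Lemma marked_uniq G adv r : one_marked_advice G adv -> r < pg_n G -> adv r = [:: true] ->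
  forall u, u < pg_n G -> adv u = [:: true] -> u = r.
Proof.
case=> r0 Hr0 [A0 O] Hr Ar.
have E : r = r0 by apply/eqP; apply: contraT => /(O r Hr); rewrite Ar.
by move=> u Hu Au; apply/eqP; apply: contraT; rewrite E => /(O u Hu); rewrite Au.
Qed.

Lemma canon_spec G adv : one_marked_advice G adv ->
  exists f, miso G adv (canon G adv).1 (canon G adv).2 f.
Proof.
move=> M; apply: (epsilon_spec (inhabits (G, 0)) (fun Kk => exists f, miso G adv Kk.1 Kk.2 f)).
case: (M) => r Hr [Ar _]; exists (G, r), id; split; first exact: iso_id.
by move=> u Hu Au; apply: (marked_uniq M).
Qed.

Lemma miso_transfer G adv G' adv' g r r' K k f :
  pg_wf G -> pg_wf G' -> one_marked_advice G adv -> one_marked_advice G' adv' ->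
  r < pg_n G -> adv r = [:: true] -> r' < pg_n G' -> adv' r' = [:: true] ->
  pg_iso G G' g -> g r = r' ->
  (miso G adv K k f -> exists f', miso G' adv' K k f' /\ forall u, u < pg_n G -> f' (g u) = f u)
  /\ (forall f', miso G' adv' K k f' -> miso G adv K k (f' \o g)).
Proof.
move=> wf wf' M M' Hr Ar Hr' Ar' Ig gr; split.
  case=> If Mf; case: (iso_inv wf Ig) => h [Ih hg gh].
  exists (f \o h); split; last by move=> u Hu /=; rewrite hg.
  split; first exact: iso_comp Ih If.
  move=> u Hu Au /=; rewrite (marked_uniq M' Hr' Ar' Hu Au) -gr hg //.
  exact: Mf.
move=> f' [If' Mf']; split; first exact: iso_comp Ig If'.
by move=> u Hu Au /=; rewrite (marked_uniq M Hr Ar Hu Au) gr; apply: Mf'.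
Qed.

Lemma canon_iso G adv G' adv' g r r' :
  pg_wf G -> pg_wf G' -> one_marked_advice G adv -> one_marked_advice G' adv' ->
  r < pg_n G -> adv r = [:: true] -> r' < pg_n G' -> adv' r' = [:: true] ->
  pg_iso G G' g -> g r = r' -> canon G' adv' = canon G adv.
Proof.
move=> wf wf' M M' Hr Ar Hr' Ar' Ig gr; rewrite /canon.
suff -> : (fun Kk : pgraph * nat => exists f, miso G' adv' Kk.1 Kk.2 f) =
          (fun Kk => exists f, miso G adv Kk.1 Kk.2 f).
  by congr epsilon; apply: proof_irrelevance.
apply: functional_extensionality => Kk; apply: propositional_extensionality; split.
  case=> f' Hf'; exists (f' \o g).
  by case: (miso_transfer Kk.1 Kk.2 f' wf wf' M M' Hr Ar Hr' Ar' Ig gr) => _; apply.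
case=> f Hf.
case: (miso_transfer Kk.1 Kk.2 f wf wf' M M' Hr Ar Hr' Ar' Ig gr) => H _.
by case: (H Hf) => f' [? _]; exists f'.
Qed.

Definition good t s (o : (pgraph * nat) * nat) : Prop :=
  forall G' adv' v', pg_wf G' -> one_marked_advice G' adv' -> v' < pg_n G' ->
    viewf G' adv' t v' = s ->
    canon G' adv' = o.1 /\ exists f, miso G' adv' o.1.1 o.1.2 f /\ f v' = o.2.

Definition dummy : (pgraph * nat) * nat :=
  ((PGraph 0 (fun _ => 0) (fun _ _ => (0, 0)), 0), 0).

Definition outf (st : nat * view) : option (pgraph * nat) :=
  if excluded_middle_informative (exists o, good st.1 st.2 o)
  then let o := epsilon (inhabits dummy) (good st.1 st.2) in Some (o.1.1, o.2)
  else None.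

Definition recvf (st : nat * view) (ms : seq ((nat * view) * nat)) : nat * view :=
  match st.2 with V d a _ => (st.1.+1, V d a [seq (m.2, m.1.2) | m <- ms]) end.

Definition Alg : algorithm :=
  @Algorithm (nat * view) ((nat * view) * nat) (fun d a => (0, V d a [::]))
    (fun s p => (s, p)) recvf outf.

Lemma exec_Alg G adv t u : exec Alg G adv t u = (t, viewf G adv t u).
Proof.
elim: t u => [|t IH] u //=.
rewrite IH; case: (view_top G adv t u) => cs -> /=.
rewrite /recvf /= -map_comp; congr (_, V _ _ _).
by apply: eq_map => p /=; rewrite IH.
Qed.

Theorem proposition3p1 :
  exists A : algorithm,
    forall (G : pgraph) (D : nat), pg_wf G -> is_diameter G D ->
      exists adv : nat -> bitseq,
        one_marked_advice G adv /\
        labeled_recognition_within A G adv (2 * D + 1).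
Proof.
exists Alg => G D wf dG.
pose adv (u : nat) : bitseq := [:: u == 0].
have Hn0 : 0 < pg_n G by case: wf.
have A0 : adv 0 = [:: true] by [].
have M : one_marked_advice G adv.
  by exists 0 => //; split => // u Hu Hne; rewrite /adv (negbTE Hne).
exists adv; split => //.
case: (canon_spec M) => f0 [If0 Mf0].
exists (canon G adv).1, f0; split => // v Hv.
have goodT : exists o, good (2 * D + 1) (viewf G adv (2 * D + 1) v) o.
  exists (canon G adv, f0 v) => G' adv' v' wf' M' Hv' Ev.
  case: (M') => r' Hr' [Ar' _].
  have [g [Ig gr gv]] := core wf wf' dG Hn0 A0 Hr' (marked_uniq M' Hr' Ar')
      (marked_uniq M Hn0 A0) Hv Hv' (esym Ev).
  split; first exact: (canon_iso wf wf' M M' Hn0 A0 Hr' Ar' Ig gr).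
  case: (miso_transfer (canon G adv).1 (canon G adv).2 f0 wf wf' M M' Hn0 A0 Hr' Ar' Ig gr)
    => H _.
  case: (H (conj If0 Mf0)) => f' [Hf' Ef']; exists f'; split => //=.
  by rewrite -gv Ef'.
pose P t := isSome (outf (t, viewf G adv t v)).
have PT : P (2 * D + 1).
  by rewrite /P /outf /=; case: excluded_middle_informative.
have ex : exists t, P t by exists (2 * D + 1).
case: (ex_minnP ex) => m Pm mmin.
exists m; first exact: mmin.
split.
  move=> s Hs; rewrite exec_Alg.
  have : ~~ P s by apply/negP => Ps; have := mmin s Ps; lia.
  by rewrite /P /=; case: (outf _).
rewrite exec_Alg /= /outf /=; move: Pm; rewrite /P /outf /=.
case: excluded_middle_informative => // Hex _.
have := epsilon_spec (inhabits dummy) _ Hex.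
set o := epsilon _ _ => Go.
case: (Go G adv v wf M Hv erefl) => Ec [f [[If Mf] Ef]].
rewrite -Ec -Ef; congr (Some (_, _)).
rewrite -Ec in If Mf.
apply: (iso_unique wf If If0 Hn0) => //.
by rewrite (Mf 0 Hn0 A0) (Mf0 0 Hn0 A0).
Qed.
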